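(* Let $p_1>p_2$ be relatively prime positive integers and $c\in[0,1]$. Write the first $p_1+p_2$ terms of $S_c(p_1,p_2)$ as $1^{k_1},2,1^{k_2},2,\dots,1^{k_{p_2}},2,1^{p_1-(k_1+\cdots+k_{p_2})}$. Then $p_1=k_1+\cdots+k_{p_2}$ (that is, the period ends with a $2$) if and only if $c=1$.
   Context: Stationary divisor method with cut point $c\in[0,1]$ for votes $(p_1,p_2)$: seats are allocated one at a time. Initially $a_1=a_2=0$; each next seat goes to a party $i$ maximizing $p_i/(a_i+c)$, whose $a_i$ then increases by $1$. Ties are broken in favor of party $1$. For $c=0$ the convention is that $p_1/0>p_2/0$, and $p_i/0>p_j/k$ for $k>0$. $S_c(p_1,p_2)$ is the infinite sequence of party labels (in $\{1,2\}$) of successive seats. It is periodic with period $p_1+p_2$, with $p_1$ ones and $p_2$ twos per period. The notation $1^k$ denotes $k$ consecutive $1$'s. *)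

(* Defs.v *)
From mathcomp Require Import all_boot all_order all_algebra.
Set Implicit Arguments. Unset Strict Implicit. Unset Printing Implicit Defensive.
Import Order.TTheory GRing.Theory Num.Theory.
Local Open Scope ring_scope.

(* Stationary divisor method with cut point c, votes (p1,p2).
   A state is the pair (a1,a2) of seats already allocated. *)

(* Does party 1 get the next seat in state (a1,a2)?  Party i's quotient is
   p_i / (a_i + c).  Convention for c = 0: p1/0 > p2/0 and p_i/0 > p_j/k for
   k > 0; ties go to party 1. *)
Definition party1_next (R : realFieldType) (c : R) (p1 p2 : nat) (a : nat * nat) : bool :=
  let d1 := (a.1)%:R + c in
  let d2 := (a.2)%:R + c in
  (d1 == 0) || ((d2 != 0) && ((p2%:R / d2) <= (p1%:R / d1))).

Definition sdm_step (R : realFieldType) (c : R) (p1 p2 : nat) (a : nat * nat) : nat * nat :=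
  if party1_next c p1 p2 a then (a.1.+1, a.2) else (a.1, a.2.+1).

Definition sdm_state (R : realFieldType) (c : R) (p1 p2 : nat) (n : nat) : nat * nat :=
  iter n (sdm_step c p1 p2) (0%N, 0%N).

(* S_c(p1,p2) as a function nat -> {1,2}; index n (0-based) is the label of
   the (n+1)-st seat. *)
Definition S_seq (R : realFieldType) (c : R) (p1 p2 : nat) (n : nat) : nat :=
  if party1_next c p1 p2 (sdm_state c p1 p2 n) then 1%N else 2%N.

(* Main.v *)
Require Import Defs.
From mathcomp Require Import all_boot all_order all_algebra.
From mathcomp Require Import reals.
From mathcomp Require Import zify ring lra.
Import Order.TTheory GRing.Theory Num.Theory.
Local Open Scope ring_scope.

Section Aux.
Variables (R : realType) (p1 p2 : nat) (c : R).
Hypotheses (hp2 : (0 < p2)%N) (hp1 : (p2 < p1)%N) (c0 : 0 <= c) (c1 : c <= 1).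

Definition gg (a : nat * nat) : R :=
  p1%:R * ((a.2)%:R + c) - p2%:R * ((a.1)%:R + c).

Lemma party1E a : party1_next c p1 p2 a = (0 <= gg a).
Proof.
have P1 : (0 : R) < p1%:R by rewrite ltr0n; lia.
have P2 : (0 : R) < p2%:R by rewrite ltr0n; lia.
rewrite /party1_next /gg.
have h1 : (0 : R) <= (a.1)%:R + c by rewrite addr_ge0.
have h2 : (0 : R) <= (a.2)%:R + c by rewrite addr_ge0.
set d1 := (a.1)%:R + c in h1 *; set d2 := (a.2)%:R + c in h2 *.
have [->|d1n] /= := eqVneq d1 0.
  by apply/esym; rewrite mulr0 subr0 mulr_ge0 // ltW.
have d1p : 0 < d1 by rewrite lt_def d1n.
have [->|d2n] /= := eqVneq d2 0.
  apply/esym/negbTE; rewrite -ltNge mulr0 sub0r oppr_lt0 mulr_gt0 //.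
have d2p : 0 < d2 by rewrite lt_def d2n.
rewrite ler_pdivlMr // mulrAC ler_pdivrMr // subr_ge0.
by apply/idP/idP => H; nra.
Qed.

Lemma inv n : let a := sdm_state c p1 p2 n in
  (a.1 + a.2 = n)%N /\ - p2%:R <= gg a < p1%:R.
Proof.
have P1 : (0 : R) < p1%:R by rewrite ltr0n; lia.
have P2 : (0 : R) < p2%:R by rewrite ltr0n; lia.
have P12 : (p2%:R : R) < p1%:R by rewrite ltr_nat.
elim: n => [|n IH].
  rewrite /sdm_state /= /gg /=; split => //.
  rewrite !add0r.
  have Q : (0:R) < p1%:R - p2%:R by rewrite subr_gt0.
  have := mulr_ge0 c0 (ltW Q).
  have := ler_wpM2r (ltW Q) c1; move=> ? ?.
  apply/andP; split; nra.
rewrite /sdm_state iterS -/(sdm_state c p1 p2 n) /=.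
move: IH => /=; case: (sdm_state c p1 p2 n) => a1 a2 /= [Hs /andP [Hl Hu]].
rewrite /sdm_step party1E /gg /=.
move: Hl Hu; rewrite /gg /= => Hl Hu.
case: ifP => Hg /=.
  split; first lia.
  rewrite -natr1; apply/andP; split; nra.
split; first lia.
move/negbT: Hg; rewrite -ltNge => Hg.
rewrite -natr1; apply/andP; split; nra.
Qed.

End Aux.

Theorem mainTheorem12 (R : realType) (p1 p2 : nat) (c : R) :
  (0 < p2)%N -> (p2 < p1)%N -> coprime p1 p2 ->
  0 <= c -> c <= 1 ->
  (S_seq c p1 p2 (p1 + p2).-1 = 2%N <-> c = 1).
Proof.
move=> hp2 hp1 _ c0 c1.
have P2 : (0 : R) < p2%:R by rewrite ltr0n; lia.
have P12 : (p2%:R : R) < p1%:R by rewrite ltr_nat.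
rewrite /S_seq (@party1E R p1 p2 c hp2 hp1 c0).
have := @inv R p1 p2 c hp2 hp1 c0 c1 (p1 + p2).-1.
case: (sdm_state c p1 p2 (p1 + p2).-1) => a1 a2 /= [Hs /andP [Hl Hu]].
move: Hl Hu; rewrite /gg /= => Hl Hu.
have [H|H] : (a1 = p1 /\ a2 = p2.-1 \/ a1 = p1.-1 /\ a2 = p2)%N.
- have [Ha|Ha] := leqP (p1.+1) a1.
    exfalso.
    have Ha2 : (a2.+2 <= p2)%N by lia.
    have R1 : (p1%:R + 1 : R) <= a1%:R by rewrite natr1 ler_nat.
    have R2 : (a2%:R + 2 : R) <= p2%:R by rewrite -[2]/(2%:R) -natrD ler_nat addn2.
    have : (a1%:R + a2%:R : R) = p1%:R + p2%:R - 1.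
      have E : (a1 + a2 = (p1 + p2) - 1)%N by lia.
      rewrite -natrD E natrB ?natrD //; lia.
    nra.
  have [Hb|Hb] := leqP a1 (p1.-2).
    exfalso.
    have Ha2 : (p2.+1 <= a2)%N by lia.
    have R1 : (a1%:R + 2 : R) <= p1%:R by rewrite -[2]/(2%:R) -natrD ler_nat addn2; lia.
    have R2 : (p2%:R + 1 : R) <= a2%:R by rewrite natr1 ler_nat.
    have : (a1%:R + a2%:R : R) = p1%:R + p2%:R - 1.
      have E : (a1 + a2 = (p1 + p2) - 1)%N by lia.
      rewrite -natrD E natrB ?natrD //; lia.
    nra.
  by lia.
- case: H => E1 E2; subst a1 a2.
  rewrite -(prednK hp2) -natr1 in Hl Hu *.
  rewrite -(prednK hp2) -natr1 in P12 P2.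
  set p := p2.-1%:R in Hl Hu P12 P2 *.
  have Q : 0 < p1%:R - (p + 1) by rewrite subr_gt0.
  set g := (X in 0 <= X).
  have -> : (0 <= g) = false.
    apply/negbTE; rewrite -ltNge /g.
    have := mulr_ge0 c0 (ltW Q); have := ler_wpM2r (ltW Q) c1; nra.
  split => // _.
  apply/eqP; rewrite eq_le c1 /=.
  rewrite -subr_le0; apply/negPn/negP; rewrite -ltNge => H.
  have := mulr_gt0 H Q; nra.
- case: H => E1 E2; subst a1 a2.
  have hp : (0 < p1)%N by lia.
  have E1 : (p1%:R : R) = p1.-1%:R + 1 by rewrite natr1 prednK.
  rewrite E1 in Hl Hu P12 *.
  set g := (X in 0 <= X).
  have Q : (0:R) < (p1.-1%:R + 1) - p2%:R by rewrite subr_gt0.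
  have -> : 0 <= g by rewrite /g; have := mulr_ge0 c0 (ltW Q); nra.
  split => // E; exfalso; rewrite E in Hu; nra.
by []. Qed.
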